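(* Let $\Delta\in(0,1]$ and consider the two-armed bandit problem with a single (dummy) context, with warm-start cost vector $c^s_0=(0.5,\ 0.5+\Delta/2)$ and interaction cost vector $c^b_0=(0.5,\ 0.5-\Delta/2)$ (both deterministic). Run the warm-started UCB algorithm described in the context with $n_s$ warm-start examples and $n_b$ interaction rounds, where $n_b\ge\exp(\Delta^2 n_s/16)$. Then its regret $\sum_{t=1}^{n_b}\big(c^b_0(a_t)-c^b_0(2)\big)$ is $\Omega\big(\Delta\exp(\Delta^2 n_s/16)\big)$.
   Context: Warm-started UCB algorithm: the input is a set $S$ of $n_s$ warm-start examples, each with cost vector $c^s_0$, and a number $n_b$ of interaction rounds. For $t=1,2,\dots,n_b$: for $i\in\{1,2\}$ let $n_{i,t-1}=\sum_{s=1}^{t-1}\mathbf{1}(a_s=i)$ be the number of earlier rounds in which action $i$ was taken; compute the empirical mean cost $\hat\mu_{i,t}=\frac{n_s c^s_0(i)+\sum_{s=1}^{t-1}\mathbf{1}(a_s=i)\,c^b_0(i)}{n_s+n_{i,t-1}}$ and the lower confidence bound $\mathrm{LCB}_{i,t}=\hat\mu_{i,t}-2\sqrt{\frac{\ln t}{n_s+n_{i,t-1}}}$; take action $a_t=\arg\min_{i\in\{1,2\}}\mathrm{LCB}_{i,t}$ and observe the cost $c^b_0(a_t)$. The optimal action for the interaction costs is action $2$. *)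

(* Defs.v *)
From Stdlib Require Import Reals Lra Lia.
Open Scope R_scope.

Inductive action := A1 | A2.

Definition costvec := action -> R.

(* Empirical mean of action i at a round where it has been taken ni times
   before; the interaction cost is deterministic so the sum
   sum_{s<t} 1(a_s=i) c^b_0(i) equals ni * c^b_0(i). *)
Definition mu_hat (ns : nat) (cs cb : costvec) (i : action) (ni : nat) : R :=
  (INR ns * cs i + INR ni * cb i) / (INR ns + INR ni).

Definition LCB (ns : nat) (cs cb : costvec) (t : nat) (i : action) (ni : nat) : R :=
  mu_hat ns cs cb i ni - 2 * sqrt (ln (INR t) / (INR ns + INR ni)).

(* argmin over {1,2}; ties broken towards action 1 (smallest index). *)
Definition choose (ns : nat) (cs cb : costvec) (t n1 n2 : nat) : action :=
  if Rle_dec (LCB ns cs cb t A1 n1) (LCB ns cs cb t A2 n2) then A1 else A2.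

(* counts ns cs cb k = (n_{1,k}, n_{2,k}): numbers of times each action was
   taken in rounds 1..k. *)
Fixpoint counts (ns : nat) (cs cb : costvec) (k : nat) : nat * nat :=
  match k with
  | O => (O, O)
  | S k' =>
      let (n1, n2) := counts ns cs cb k' in
      match choose ns cs cb (S k') n1 n2 with
      | A1 => (S n1, n2)
      | A2 => (n1, S n2)
      end
  end.

(* a_t, for t >= 1 *)
Definition ucb_action (ns : nat) (cs cb : costvec) (t : nat) : action :=
  let (n1, n2) := counts ns cs cb (pred t) in choose ns cs cb t n1 n2.

Fixpoint ucb_regret (ns : nat) (cs cb : costvec) (nb : nat) : R :=
  match nb with
  | O => 0
  | S k => ucb_regret ns cs cb k + (cb (ucb_action ns cs cb (S k)) - cb A2)
  end.

Definition cs0 (D : R) : costvec :=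
  fun i => match i with A1 => 1/2 | A2 => 1/2 + D/2 end.
Definition cb0 (D : R) : costvec :=
  fun i => match i with A1 => 1/2 | A2 => 1/2 - D/2 end.

(* Main.v *)
Require Import Defs.
From Stdlib Require Import Reals Lra Lia.
Open Scope R_scope.

Lemma ln_le (x y : R) : 0 < x -> x <= y -> ln x <= ln y.
Proof. intros Hx [H|H]; [left; apply ln_increasing; auto | subst; lra]. Qed.

Lemma lcb_ineq (D : R) (ns k : nat) :
  0 < D -> (1 <= ns)%nat ->
  0 <= ln (INR (S k)) <= D ^ 2 * INR ns / 16 ->
  LCB ns (cs0 D) (cb0 D) (S k) Defs.A1 k <= LCB ns (cs0 D) (cb0 D) (S k) Defs.A2 0.
Proof.
  intros HD Hns [HL0 HL].
  set (L := ln (INR (S k))) in *.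
  assert (Hn : 1 <= INR ns) by (apply (le_INR 1); exact Hns).
  assert (Hk : 0 <= INR k) by apply pos_INR.
  unfold LCB, mu_hat, cs0, cb0.
  replace ((INR ns * (1/2) + INR k * (1/2)) / (INR ns + INR k)) with (1/2)
    by (field; lra).
  replace (INR 0) with 0 by reflexivity.
  replace ((INR ns * (1/2 + D/2) + 0 * (1/2 - D/2)) / (INR ns + 0)) with (1/2 + D/2)
    by (field; lra).
  assert (H1 : 0 <= sqrt (L / (INR ns + INR k))) by apply sqrt_pos.
  assert (H2 : sqrt (L / (INR ns + 0)) <= D / 4).
  { rewrite <- (sqrt_pow2 (D/4)) by lra.
    apply sqrt_le_1_alt.
    replace ((D/4)^2) with ((D ^ 2 * INR ns / 16) / (INR ns + 0)) by (field; lra).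
    unfold Rdiv. apply Rmult_le_compat_r.
    - left; apply Rinv_0_lt_compat; lra.
    - exact HL. }
  fold L; lra.
Qed.

Lemma counts_A1 (D : R) (ns : nat) :
  0 < D -> (1 <= ns)%nat ->
  forall k, INR k <= exp (D ^ 2 * INR ns / 16) ->
  counts ns (cs0 D) (cb0 D) k = (k, 0%nat).
Proof.
  intros HD Hns k. induction k as [|k IH]; intros Hk; [reflexivity|].
  simpl counts. rewrite IH.
  2:{ rewrite S_INR in Hk; lra. }
  unfold choose. destruct Rle_dec as [_|Hn]; [reflexivity|].
  exfalso; apply Hn. apply lcb_ineq; auto. split.
  - rewrite <- ln_1. apply ln_le; [lra|]. rewrite S_INR. pose proof (pos_INR k); lra.
  - rewrite <- (ln_exp (D ^ 2 * INR ns / 16)). apply ln_le; [|exact Hk].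
    rewrite S_INR. pose proof (pos_INR k); lra.
Qed.

Lemma regret_mono (D : R) (ns n : nat) :
  0 < D -> ucb_regret ns (cs0 D) (cb0 D) n <= ucb_regret ns (cs0 D) (cb0 D) (S n).
Proof.
  intros HD. simpl ucb_regret at 2.
  destruct (ucb_action ns (cs0 D) (cb0 D) (S n)); simpl; lra.
Qed.

Lemma regret_mono_le (D : R) (ns n m : nat) :
  0 < D -> (n <= m)%nat ->
  ucb_regret ns (cs0 D) (cb0 D) n <= ucb_regret ns (cs0 D) (cb0 D) m.
Proof.
  intros HD Hnm. induction Hnm; [lra|].
  eapply Rle_trans; [exact IHHnm| apply regret_mono; exact HD].
Qed.

Lemma regret_main (D : R) (ns : nat) :
  0 < D -> (1 <= ns)%nat ->
  forall n,
  (INR n <= exp (D ^ 2 * INR ns / 16) ->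
     ucb_regret ns (cs0 D) (cb0 D) n = INR n * (D / 2)) /\
  ucb_regret ns (cs0 D) (cb0 D) n >= D / 2 * Rmin (INR n) (exp (D ^ 2 * INR ns / 16) - 1).
Proof.
  intros HD Hns n. set (E := exp (D ^ 2 * INR ns / 16)).
  assert (HE : 0 < E) by apply exp_pos.
  induction n as [|n [IH1 IH2]].
  - split; [intros; simpl; lra|]. simpl ucb_regret.
    simpl INR. assert (Rmin 0 (E - 1) <= 0) by (unfold Rmin; destruct Rle_dec; lra).
    assert (D / 2 * Rmin 0 (E - 1) <= D / 2 * 0) by (apply Rmult_le_compat_l; lra).
    lra.
  - assert (Hnn : 0 <= INR n) by apply pos_INR.
    rewrite S_INR.
    assert (Hex : INR n + 1 <= E -> ucb_regret ns (cs0 D) (cb0 D) (S n) = (INR n + 1) * (D / 2)).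
    { intros Hle. simpl ucb_regret. rewrite IH1 by lra.
      unfold ucb_action. simpl pred.
      rewrite (counts_A1 D ns HD Hns n) by (fold E; lra).
      unfold choose. destruct Rle_dec as [_|Hn].
      - simpl. lra.
      - exfalso; apply Hn. apply lcb_ineq; auto. split.
        + rewrite <- ln_1. apply ln_le; [lra|]. rewrite S_INR. lra.
        + rewrite <- (ln_exp (D ^ 2 * INR ns / 16)). apply ln_le; [|rewrite S_INR; fold E; lra].
          rewrite S_INR. lra. }
    split; [exact Hex|].
    destruct (Rle_dec (INR n + 1) E) as [Hle|Hgt].
    + rewrite Hex by exact Hle. unfold Rmin; destruct Rle_dec.
      * lra.
      * assert (D/2*(E-1) <= D/2*(INR n+1)) by (apply Rmult_le_compat_l; lra). lra.
    + pose proof (regret_mono D ns n HD).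
      assert (Hm1 : Rmin (INR n) (E - 1) = E - 1) by (unfold Rmin; destruct Rle_dec; lra).
      assert (Hm2 : Rmin (INR n + 1) (E - 1) = E - 1) by (unfold Rmin; destruct Rle_dec; lra).
      rewrite Hm1 in IH2. rewrite Hm2. lra.
Qed.

Theorem mainTheorem2 :
  exists c : R, 0 < c /\
    forall (D : R) (ns nb : nat),
      0 < D <= 1 ->
      (1 <= ns)%nat ->
      INR nb >= exp (D ^ 2 * INR ns / 16) ->
      ucb_regret ns (cs0 D) (cb0 D) nb >= c * D * exp (D ^ 2 * INR ns / 16).
Proof.
  exists (1/4). split; [lra|].
  intros D ns nb [HD HD1] Hns Hnb.
  set (E := exp (D ^ 2 * INR ns / 16)) in *.
  assert (HE1 : 1 <= E).
  { unfold E. rewrite <- exp_0. destruct (Req_dec (D ^ 2 * INR ns / 16) 0) as [H0|H0].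
    - rewrite H0; lra.
    - left. apply exp_increasing.
      assert (0 < D ^ 2) by (apply pow_lt; lra).
      assert (1 <= INR ns) by (apply (le_INR 1); exact Hns).
      assert (0 < D ^ 2 * INR ns) by (apply Rmult_lt_0_compat; lra). lra. }
  destruct (regret_main D ns HD Hns nb) as [_ H2]. fold E in H2.
  assert (Hm : Rmin (INR nb) (E - 1) = E - 1) by (unfold Rmin; destruct Rle_dec; lra).
  rewrite Hm in H2.
  assert (Hnb1 : (1 <= nb)%nat).
  { destruct nb; [simpl in Hnb; lra| lia]. }
  pose proof (regret_mono_le D ns 1 nb HD Hnb1) as H3.
  destruct (regret_main D ns HD Hns 1) as [H1 _]. fold E in H1.
  rewrite H1 in H3 by (simpl; lra). simpl INR in H3.
  destruct (Rle_dec E 2).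
  - assert (D * E <= D * 2) by (apply Rmult_le_compat_l; lra). lra.
  - assert (D * (E - 1) >= D * (E/2)) by (apply Rle_ge, Rmult_le_compat_l; lra). lra.
Qed.
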